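(* Let $a<b$ be real, $L:=b-a$, and for real $x$ and real $x_1\ne x_2$ define $$V(x,x_1,x_2):=\frac{e^{-2|x_1-x|}+e^{-2|x_2-x|}-2e^{-(|x_1-x|+|x_2-x|+|x_1-x_2|)}}{1-e^{-2|x_1-x_2|}}.$$ Let $q:=\frac{-e^{-L}+\sqrt{e^{-2L}+8e^{-L}}}{2}$. Then $$\sup_{x_1,x_2\in\mathbb{R},\,x_1\ne x_2}\ \min_{x\in[a,b]}V(x,x_1,x_2)=q,$$ and the supremum is attained at $x_1=a-\tfrac12\ln q$, $x_2=b+\tfrac12\ln q$ (which satisfy $a\le x_1<x_2\le b$).
   Context: For the exponential kernel $K(x,y)=e^{-|x-y|}$ on $\mathbb{R}$ and $\mathcal{X}=\{x_1,x_2\}$, $V(x,x_1,x_2)$ equals $K(x,x)-\operatorname{dist}^2(K(x,\cdot),\operatorname{span}\{K(x_1,\cdot),K(x_2,\cdot)\})$ in the RKHS of $K$, so maximizing $\min_{x\in[a,b]}V$ is minimizing the worst-case reconstruction error on $[a,b]$ measured in the maximum norm. *)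

(* Defs.v *)
From Stdlib Require Import Reals Lra.
Open Scope R_scope.

Definition V (x x1 x2 : R) : R :=
  (exp (-2 * Rabs (x1 - x)) + exp (-2 * Rabs (x2 - x))
   - 2 * exp (- (Rabs (x1 - x) + Rabs (x2 - x) + Rabs (x1 - x2))))
  / (1 - exp (-2 * Rabs (x1 - x2))).

Definition qval (a b : R) : R :=
  let L := b - a in
  (- exp (- L) + sqrt (exp (-2 * L) + 8 * exp (- L))) / 2.

Definition is_min_of (E : R -> Prop) (m : R) : Prop :=
  E m /\ forall y, E y -> m <= y.

Definition Vvals (a b x1 x2 : R) : R -> Prop :=
  fun y => exists x, a <= x <= b /\ y = V x x1 x2.

Definition minV (a b x1 x2 m : R) : Prop := is_min_of (Vvals a b x1 x2) m.

(* Main.v *)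
Require Import Defs.
From Stdlib Require Import Reals Lra Psatz.
Open Scope R_scope.

Lemma exp_le x y : x <= y -> exp x <= exp y.
Proof. intros [H|H]; [left; apply exp_increasing; auto | right; subst; auto]. Qed.

Lemma exp_lt1 x : x < 0 -> exp x < 1.
Proof. intros H. rewrite <- exp_0. apply exp_increasing; lra. Qed.

Lemma Vsym x x1 x2 : V x x1 x2 = V x x2 x1.
Proof.
  unfold V. rewrite (Rabs_minus_sym x1 x2).
  f_equal. f_equal; [ring|]. f_equal. f_equal. ring.
Qed.

Lemma Vleft x x1 x2 : x1 < x2 -> x <= x1 -> V x x1 x2 = exp (-2 * (x1 - x)).
Proof.
  intros h1 h2. unfold V.
  rewrite (Rabs_right (x1 - x)) by lra.
  rewrite (Rabs_right (x2 - x)) by lra.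
  rewrite (Rabs_left (x1 - x2)) by lra.
  set (P := exp (-2 * (x1 - x))).
  set (R := exp (-2 * - (x1 - x2))).
  assert (HQ : exp (-2 * (x2 - x)) = P * R) by (unfold P, R; rewrite <- exp_plus; f_equal; ring).
  assert (HQ2 : exp (- (x1 - x + (x2 - x) + - (x1 - x2))) = P * R) by (unfold P, R; rewrite <- exp_plus; f_equal; ring).
  rewrite HQ, HQ2.
  assert (R < 1) by (apply exp_lt1; lra).
  field. lra.
Qed.

Lemma Vright x x1 x2 : x1 < x2 -> x2 <= x -> V x x1 x2 = exp (-2 * (x - x2)).
Proof.
  intros h1 h2. unfold V.
  rewrite (Rabs_left1 (x1 - x)) by lra.
  rewrite (Rabs_left1 (x2 - x)) by lra.
  rewrite (Rabs_left (x1 - x2)) by lra.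
  set (P := exp (-2 * (x - x2))).
  set (R := exp (-2 * - (x1 - x2))).
  assert (HQ : exp (-2 * - (x1 - x)) = P * R) by (unfold P, R; rewrite <- exp_plus; f_equal; ring).
  assert (HP : exp (-2 * - (x2 - x)) = P) by (unfold P; f_equal; ring).
  assert (HQ2 : exp (- (- (x1 - x) + - (x2 - x) + - (x1 - x2))) = P * R) by (unfold P, R; rewrite <- exp_plus; f_equal; ring).
  rewrite HQ, HQ2, HP.
  assert (R < 1) by (apply exp_lt1; lra).
  field. lra.
Qed.

Lemma Vmid x x1 x2 : x1 < x2 -> x1 <= x <= x2 ->
  V x x1 x2 = (exp (-2 * (x - x1)) + exp (-2 * (x2 - x)) - 2 * (exp (- (x2 - x1)) * exp (- (x2 - x1))))
              / (1 - exp (- (x2 - x1)) * exp (- (x2 - x1))).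
Proof.
  intros h1 h2. unfold V.
  rewrite (Rabs_left1 (x1 - x)) by lra.
  rewrite (Rabs_right (x2 - x)) by lra.
  rewrite (Rabs_left (x1 - x2)) by lra.
  rewrite <- exp_plus.
  replace (-2 * - (x1 - x)) with (-2 * (x - x1)) by ring.
  replace (- (- (x1 - x) + (x2 - x) + - (x1 - x2))) with (- (x2 - x1) + - (x2 - x1)) by ring.
  replace (-2 * - (x1 - x2)) with (- (x2 - x1) + - (x2 - x1)) by ring.
  reflexivity.
Qed.

Lemma prodAB x x1 x2 : exp (-2 * (x - x1)) * exp (-2 * (x2 - x)) = exp (- (x2 - x1)) * exp (- (x2 - x1)).
Proof. rewrite <- !exp_plus. f_equal. ring. Qed.

Lemma div_le X Y Z W : 0 < Y -> 0 < W -> X * W <= Z * Y -> X / Y <= Z / W.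
Proof.
  intros hY hW h.
  replace (X / Y) with ((X * W) * / (Y * W)) by (field; lra).
  replace (Z / W) with ((Z * Y) * / (Y * W)) by (field; lra).
  apply Rmult_le_compat_r; [left; apply Rinv_0_lt_compat; nra | auto].
Qed.

Lemma alg_lb A B r : 0 < A -> 0 < B -> 0 < r -> r < 1 -> A * B = r * r ->
  2 * r / (1 + r) <= (A + B - 2 * (r * r)) / (1 - r * r).
Proof.
  intros hA hB hr hr1 hAB.
  assert (h : 2 * r <= A + B).
  { destruct (Rle_lt_dec (2 * r) (A + B)) as [h|h]; auto.
    exfalso. assert (0 <= (A - B) * (A - B)) by apply Rle_0_sqr.
    assert ((A + B) * (A + B) < (2*r) * (2*r)) by (apply Rmult_le_0_lt_compat; lra). nra. }
  apply div_le; [lra | nra | ].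
  assert (0 <= (A + B - 2 * r) * (1 + r)) by nra. nra.
Qed.

Lemma alg_ub A B : 0 < A -> A <= B -> B <= 1 -> A * B < 1 ->
  (A + B - 2 * (A * B)) / (1 - A * B) <= 2 * B / (1 + B).
Proof.
  intros hA hAB hB hR. apply div_le; try lra.
  assert (0 <= (B - A) * (1 - B)) by nra. nra.
Qed.

Lemma Vmid_lb x x1 x2 : x1 < x2 -> x1 <= x <= x2 ->
  2 * exp (- (x2 - x1)) / (1 + exp (- (x2 - x1))) <= V x x1 x2.
Proof.
  intros h1 h2. rewrite Vmid by auto.
  apply alg_lb; try apply exp_pos; [apply exp_lt1; lra | apply prodAB].
Qed.

Lemma Vmid_eq x1 x2 : x1 < x2 ->
  V ((x1 + x2) / 2) x1 x2 = 2 * exp (- (x2 - x1)) / (1 + exp (- (x2 - x1))).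
Proof.
  intros h1. rewrite Vmid by lra.
  replace (-2 * ((x1 + x2) / 2 - x1)) with (- (x2 - x1)) by field.
  replace (-2 * (x2 - (x1 + x2) / 2)) with (- (x2 - x1)) by field.
  assert (exp (- (x2 - x1)) < 1) by (apply exp_lt1; lra).
  assert (0 < exp (- (x2 - x1))) by apply exp_pos.
  field. split; nra.
Qed.

Lemma Vub_r x x1 x2 : x1 < x2 -> x1 <= x <= x2 -> x2 - x <= x - x1 ->
  V x x1 x2 <= 2 * exp (-2 * (x2 - x)) / (1 + exp (-2 * (x2 - x))).
Proof.
  intros h1 h2 h3. rewrite Vmid by auto. rewrite <- (prodAB x x1 x2).
  apply alg_ub; try apply exp_pos.
  - apply exp_le; lra.
  - rewrite <- exp_0; apply exp_le; lra.
  - rewrite prodAB. assert (exp (- (x2 - x1)) < 1) by (apply exp_lt1; lra).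
    assert (0 < exp (- (x2 - x1))) by apply exp_pos. nra.
Qed.

Lemma Vub_l x x1 x2 : x1 < x2 -> x1 <= x <= x2 -> x - x1 <= x2 - x ->
  V x x1 x2 <= 2 * exp (-2 * (x - x1)) / (1 + exp (-2 * (x - x1))).
Proof.
  intros h1 h2 h3. rewrite Vmid by auto. rewrite <- (prodAB x x1 x2).
  rewrite (Rmult_comm (exp (-2 * (x - x1))) (exp (-2 * (x2 - x)))), (Rplus_comm (exp (-2 * (x - x1)))).
  apply alg_ub; try apply exp_pos.
  - apply exp_le; lra.
  - rewrite <- exp_0; apply exp_le; lra.
  - rewrite (Rmult_comm (exp (-2 * (x2 - x)))), prodAB. assert (exp (- (x2 - x1)) < 1) by (apply exp_lt1; lra).
    assert (0 < exp (- (x2 - x1))) by apply exp_pos. nra.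
Qed.
Lemma qfacts a b : a < b ->
  0 < exp (- (b - a)) /\ exp (- (b - a)) < 1 /\
  qval a b * qval a b + exp (- (b - a)) * qval a b = 2 * exp (- (b - a)) /\
  exp (- (b - a)) < qval a b /\ qval a b < 1.
Proof.
  intros hab.
  set (E := exp (- (b - a))).
  assert (hE0 : 0 < E) by apply exp_pos.
  assert (hE1 : E < 1) by (apply exp_lt1; lra).
  assert (hq : qval a b = (- E + sqrt (E * E + 8 * E)) / 2).
  { unfold qval. cbv zeta. fold E.
    replace (exp (-2 * (b - a))) with (E * E); [reflexivity|].
    unfold E; rewrite <- exp_plus; f_equal; ring. }
  rewrite hq.
  set (S := sqrt (E * E + 8 * E)).
  assert (hS0 : 0 <= S) by apply sqrt_pos.
  assert (hS : S * S = E * E + 8 * E) by (apply sqrt_sqrt; nra).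
  repeat split; auto.
  - nra.
  - destruct (Rle_lt_dec S (3 * E)) as [h|h]; [|lra].
    exfalso. assert (S * S <= (3*E) * (3*E)) by (apply Rmult_le_compat; lra). nra.
  - destruct (Rle_lt_dec (2 + E) S) as [h|h]; [|lra].
    exfalso. assert ((2+E)*(2+E) <= S * S) by (apply Rmult_le_compat; lra). nra.
Qed.

Lemma Lmid E q r : 0 < E -> E < 1 -> 0 < q -> q < 1 -> q * q + E * q = 2 * E ->
  0 < r -> r * q <= E -> 2 * r / (1 + r) <= q.
Proof.
  intros hE hE1 hq hq1 hqe hr hrq.
  assert (h : r * (2 - q) <= q).
  { apply (Rmult_le_reg_l q); [lra|].
    assert (r * q * (2 - q) <= E * (2 - q)) by (apply Rmult_le_compat_r; lra).
    nra. }
  apply (Rmult_le_reg_r (1 + r)); [lra|].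
  unfold Rdiv. rewrite Rmult_assoc, Rinv_l by lra. nra.
Qed.

Lemma sq_lt u v : 0 <= u -> 0 < v -> u * u < v * v -> u <= v.
Proof.
  intros hu hv h. destruct (Rle_lt_dec u v) as [h'|h']; auto.
  exfalso. assert (v * v <= u * u) by (apply Rmult_le_compat; lra). lra.
Qed.

Ltac expid := repeat rewrite <- exp_plus; f_equal; ring.

Lemma ub a b x1 x2 : a < b -> x1 < x2 -> exists x, a <= x <= b /\ V x x1 x2 <= qval a b.
Proof.
  intros hab h12.
  destruct (qfacts a b hab) as [hE0 [hE1 [hqe [hEq hq1]]]].
  set (E := exp (- (b - a))) in *.
  set (q := qval a b) in *.
  assert (hq0 : 0 < q) by lra.
  assert (Lm : forall r, 0 < r -> r * q <= E -> 2 * r / (1 + r) <= q)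
    by (intros r0 ? ?; apply (Lmid E q r0); auto).
  assert (hEE : E * E < E) by nra.
  set (r := exp (- (x2 - x1))).
  assert (hr0 : 0 < r) by apply exp_pos.
  assert (hr1 : r < 1) by (apply exp_lt1; lra).
  destruct (Rle_lt_dec b x1) as [hb1|hb1].
  { exists a. split; [lra|]. rewrite Vleft by lra.
    assert (exp (-2 * (x1 - a)) <= E) by (apply exp_le; lra). lra. }
  destruct (Rle_lt_dec x2 a) as [ha2|ha2].
  { exists b. split; [lra|]. rewrite Vright by lra.
    assert (exp (-2 * (b - x2)) <= E) by (apply exp_le; lra). lra. }
  destruct (Rle_lt_dec a x1) as [ha1|ha1]; destruct (Rle_lt_dec x2 b) as [hb2|hb2].
  -
    set (P := exp (-2 * (x1 - a))). set (Q := exp (-2 * (b - x2))).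
    destruct (Rle_lt_dec P q) as [hP|hP].
    { exists a. split; [lra|]. rewrite Vleft by lra. exact hP. }
    destruct (Rle_lt_dec Q q) as [hQ|hQ].
    { exists b. split; [lra|]. rewrite Vright by lra. exact hQ. }
    exists ((x1 + x2) / 2). split; [lra|]. rewrite Vmid_eq by lra. fold r.
    apply Lm; auto.
    assert (hPQ : P * Q * (r * r) = E * E) by (unfold P, Q, r, E; expid).
    assert (q * q < P * Q) by (apply Rmult_le_0_lt_compat; lra).
    assert (q * q * (r * r) < E * E) by (rewrite <- hPQ; apply Rmult_lt_compat_r; nra).
    apply sq_lt; nra.
  -
    set (P := exp (-2 * (x1 - a))).
    destruct (Rle_lt_dec P q) as [hP|hP].
    { exists a. split; [lra|]. rewrite Vleft by lra. exact hP. }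
    set (Y := exp (-2 * (b - x1))).
    assert (hY0 : 0 < Y) by apply exp_pos.
    assert (hYP : Y * P = E * E) by (unfold P, Y, E; expid).
    assert (hYq : Y * q < E * E) by (rewrite <- hYP; apply Rmult_lt_compat_l; lra).
    destruct (Rle_lt_dec (b - x1) (x2 - b)) as [hm|hm].
    { exists b. split; [lra|]. eapply Rle_trans; [apply Vub_l; lra|]. fold Y.
      apply Lm; lra. }
    exists ((x1 + x2) / 2). split; [lra|]. rewrite Vmid_eq by lra. fold r.
    apply Lm; auto.
    assert (hrr : r * r < Y).
    { replace (r * r) with (exp (-2 * (x2 - x1))) by (unfold r; expid).
      apply exp_increasing; lra. }
    assert (r * r * q < E * E) by nra.
    apply sq_lt; nra.
  -
    set (Q := exp (-2 * (b - x2))).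
    destruct (Rle_lt_dec Q q) as [hQ|hQ].
    { exists b. split; [lra|]. rewrite Vright by lra. exact hQ. }
    set (Y := exp (-2 * (x2 - a))).
    assert (hY0 : 0 < Y) by apply exp_pos.
    assert (hYQ : Y * Q = E * E) by (unfold Q, Y, E; expid).
    assert (hYq : Y * q < E * E) by (rewrite <- hYQ; apply Rmult_lt_compat_l; lra).
    destruct (Rle_lt_dec (x2 - a) (a - x1)) as [hm|hm].
    { exists a. split; [lra|]. eapply Rle_trans; [apply Vub_r; lra|]. fold Y.
      apply Lm; lra. }
    exists ((x1 + x2) / 2). split; [lra|]. rewrite Vmid_eq by lra. fold r.
    apply Lm; auto.
    assert (hrr : r * r < Y).
    { replace (r * r) with (exp (-2 * (x2 - x1))) by (unfold r; expid).
      apply exp_increasing; lra. }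
    assert (r * r * q < E * E) by nra.
    apply sq_lt; nra.
  -
    destruct (Rle_lt_dec (x2 - a) (a - x1)) as [hm|hm].
    { exists a. split; [lra|]. eapply Rle_trans; [apply Vub_r; lra|].
      apply Lm; [apply exp_pos|].
      assert (exp (-2 * (x2 - a)) < E * E).
      { replace (E * E) with (exp (-2 * (b - a))) by (unfold E; expid).
        apply exp_increasing; lra. }
      nra. }
    destruct (Rle_lt_dec (b - x1) (x2 - b)) as [hm'|hm'].
    { exists b. split; [lra|]. eapply Rle_trans; [apply Vub_l; lra|].
      apply Lm; [apply exp_pos|].
      assert (exp (-2 * (b - x1)) < E * E).
      { replace (E * E) with (exp (-2 * (b - a))) by (unfold E; expid).
        apply exp_increasing; lra. }
      nra. }
    exists ((x1 + x2) / 2). split; [lra|]. rewrite Vmid_eq by lra. fold r.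
    apply Lm; auto.
    assert (r < E) by (apply exp_increasing; lra).
    nra.
Qed.
Lemma Vcont x1 x2 : continuity (fun x => V x x1 x2).
Proof.
  assert (Hexp: continuity exp) by (apply derivable_continuous; apply derivable_exp).
  assert (Ha : forall c, continuity (fun x => Rabs (c - x))).
  { intros c. change (continuity (comp Rabs (fun x => c - x))).
    apply continuity_comp; [apply derivable_continuous; reg | apply Rcontinuity_abs]. }
  assert (Hf : forall c k', continuity (fun x => exp (k' * Rabs (c - x)))).
  { intros c k'.
    change (continuity (comp exp (comp (fun y => k' * y) (fun x => Rabs (c - x))))) .
    apply continuity_comp; [|exact Hexp].
    apply continuity_comp; [apply Ha|apply derivable_continuous; reg]. }
  unfold V, Rdiv.
  apply continuity_mult; [| apply continuity_const; intros ? ?; reflexivity].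
  apply continuity_minus; [apply continuity_plus; apply Hf|].
  apply continuity_scal.
  change (continuity (comp exp (fun x => - (Rabs (x1 - x) + Rabs (x2 - x) + Rabs (x1 - x2))))).
  apply continuity_comp; [|exact Hexp].
  apply continuity_opp. apply continuity_plus; [apply continuity_plus; apply Ha|apply continuity_const; intros ? ?; reflexivity].
Qed.

Lemma att a b : a < b ->
  (let x1 := a - ln (qval a b) / 2 in
   let x2 := b + ln (qval a b) / 2 in
   a <= x1 /\ x1 < x2 /\ x2 <= b /\ minV a b x1 x2 (qval a b)).
Proof.
  intros hab.
  destruct (qfacts a b hab) as [hE0 [hE1 [hqe [hEq hq1]]]].
  set (E := exp (- (b - a))) in *.
  set (q := qval a b) in *.
  assert (hq0 : 0 < q) by lra.
  assert (hl0 : ln q < 0) by (rewrite <- ln_1; apply ln_increasing; lra).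
  assert (hlE : - (b - a) < ln q).
  { rewrite <- (ln_exp (- (b - a))). apply ln_increasing; auto. }
  intros x1 x2.
  assert (h12 : x1 < x2) by (unfold x1, x2; lra).
  assert (hqa : exp (-2 * (x1 - a)) = q).
  { unfold x1. replace (-2 * (a - ln q / 2 - a)) with (ln q) by field. apply exp_ln; auto. }
  assert (hqb : exp (-2 * (b - x2)) = q).
  { unfold x2. replace (-2 * (b - (b + ln q / 2))) with (ln q) by field. apply exp_ln; auto. }
  assert (hr : exp (- (x2 - x1)) = E * / q).
  { assert (h : exp (- (x2 - x1)) * exp (ln q) = E).
    { unfold x1, x2, E. rewrite <- exp_plus. f_equal. field. }
    rewrite exp_ln in h by auto. rewrite <- h. field. lra. }
  assert (hmid : 2 * exp (- (x2 - x1)) / (1 + exp (- (x2 - x1))) = q).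
  { rewrite hr.
    replace (2 * (E * / q) / (1 + E * / q)) with (2 * E / (q + E)) by (field; lra).
    apply (Rmult_eq_reg_r (q + E)); [|lra].
    unfold Rdiv. rewrite Rmult_assoc, Rinv_l by lra. lra. }
  assert (ha1 : a <= x1) by (unfold x1; lra).
  assert (hb2 : x2 <= b) by (unfold x2; lra).
  split; [auto|]. split; [auto|]. split; [auto|].
  split.
  - exists a. split; [lra|]. rewrite Vleft by lra. auto.
  - intros y [x [hx ->]].
    destruct (Rle_lt_dec x x1) as [h1|h1].
    { rewrite Vleft by auto. rewrite <- hqa. apply exp_le. lra. }
    destruct (Rle_lt_dec x2 x) as [h2|h2].
    { rewrite Vright by auto. rewrite <- hqb. apply exp_le. lra. }
    rewrite <- hmid. apply Vmid_lb; lra.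
Qed.

Theorem mainTheorem8 (a b : R) (hab : a < b) :
  (forall x1 x2, x1 <> x2 -> exists m, minV a b x1 x2 m) /\
  is_lub (fun s => exists x1 x2, x1 <> x2 /\ minV a b x1 x2 s) (qval a b) /\
  (let x1 := a - ln (qval a b) / 2 in
   let x2 := b + ln (qval a b) / 2 in
   a <= x1 /\ x1 < x2 /\ x2 <= b /\ minV a b x1 x2 (qval a b)).
Proof.
  split.
  { intros x1 x2 hne.
    destruct (continuity_ab_min (fun x => V x x1 x2) a b) as [mx [hmin hmx]];
      [lra | intros; apply Vcont |].
    exists (V mx x1 x2). split; [exists mx; auto|].
    intros y [x [hx ->]]. apply hmin; auto. }
  split; [| apply att; auto].
  split.
  - intros s [x1 [x2 [hne [_ hmin]]]].
    destruct (Rtotal_order x1 x2) as [h|[h|h]]; [| contradiction |].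
    + destruct (ub a b x1 x2 hab h) as [x [hx hV]].
      eapply Rle_trans; [apply hmin; exists x; split; eauto | auto].
    + destruct (ub a b x2 x1 hab h) as [x [hx hV]].
      eapply Rle_trans; [apply hmin; exists x; split; eauto | rewrite Vsym; auto].
  - intros M hM. apply hM.
    destruct (att a b hab) as [h1 [h2 [h3 h4]]].
    eexists; eexists; split; [| exact h4]. lra.
Qed.
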